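(* Let $d\ge 2$ and let ${\cal P}=\{\Pi_i,\frac{1}{d^2}\}_{i=1}^{d^2}$ be a symmetric informationally complete (SIC) ensemble on $\mathbb{C}^d$, i.e. $\Pi_i=|\psi_i\rangle\langle\psi_i|$ for unit vectors $\psi_i$ with $|\langle\psi_i|\psi_j\rangle|^2=\frac{1}{d+1}$ for all $i\ne j$, each with probability $1/d^2$. Then the accessible fidelity of ${\cal P}$ is $$F_{\cal P}=\frac{2}{d+1}.$$ Moreover, for any (finite) POVM ${\cal G}=\{G_b\}$ on $\mathbb{C}^d$ consisting of rank-one elements $G_b=g_b|\phi_b\rangle\langle\phi_b|$ ($g_b>0$, $\|\phi_b\|=1$), the achievable fidelity satisfies $F_{\cal P}({\cal G})=\frac{2}{d+1}=F_{\cal P}$, so any such POVM can be used in an optimal eavesdropping strategy.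
   Context: For a POVM ${\cal E}=\{E_b\}$ and a state-reproduction strategy ${\cal M}:b\mapsto\sigma_b$ (density operators), the average fidelity is $F_{\cal P}({\cal E},{\cal M})=\sum_{b,i}\pi_i\,{\rm tr}(\Pi_iE_b)\,{\rm tr}(\Pi_i\sigma_b)$ (here $\pi_i=1/d^2$). The achievable fidelity of ${\cal E}$ is $F_{\cal P}({\cal E})=\sup_{\cal M}F_{\cal P}({\cal E},{\cal M})$, and the accessible fidelity is $F_{\cal P}=\sup_{{\cal E},{\cal M}}F_{\cal P}({\cal E},{\cal M})$. *)

(* Defs.v *)
From HB Require Import structures.
From mathcomp Require Import all_boot all_order all_algebra.
From mathcomp Require Import complex.
From mathcomp Require Import reals.
Set Implicit Arguments. Unset Strict Implicit. Unset Printing Implicit Defensive.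
Import Order.TTheory GRing.Theory Num.Theory.
Local Open Scope ring_scope.
Local Open Scope complex_scope.

Section Q.
Variable R : realType.
Local Notation C := R[i].

Definition adjmx (m n : nat) (A : 'M[C]_(m, n)) : 'M[C]_(n, m) :=
  (map_mx Num.conj A)^T.

Definition cdot (d : nat) (u v : 'cV[C]_d) : C := (adjmx u *m v) 0 0.

Definition ketbra (d : nat) (v : 'cV[C]_d) : 'M[C]_d := v *m adjmx v.

Definition psd (d : nat) (A : 'M[C]_d) : Prop :=
  adjmx A = A /\ forall v : 'cV[C]_d, 0 <= cdot v (A *m v).

Definition povm (d n : nat) (E : 'I_n -> 'M[C]_d) : Prop :=
  (forall b, psd (E b)) /\ \sum_(b < n) E b = 1%:M.

Definition density (d : nat) (s : 'M[C]_d) : Prop := psd s /\ \tr s = 1.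

Definition SIC (d : nat) (psi : 'I_(d ^ 2) -> 'cV[C]_d) : Prop :=
  (forall i, cdot (psi i) (psi i) = 1) /\
  (forall i j, i != j ->
     `|cdot (psi i) (psi j)| ^+ 2 = ((d.+1)%:R)^-1).

(* F_P(E, M) = sum_{b,i} pi_i tr(Pi_i E_b) tr(Pi_i sigma_b), pi_i = 1/d^2.
   The value is real; we take its real part to land in R. *)
Definition avg_fidelity (d n : nat) (psi : 'I_(d ^ 2) -> 'cV[C]_d)
    (E : 'I_n -> 'M[C]_d) (M : 'I_n -> 'M[C]_d) : R :=
  complex.Re (\sum_(b < n) \sum_(i < d ^ 2)
        ((d ^ 2)%:R)^-1 * \tr (ketbra (psi i) *m E b)
                        * \tr (ketbra (psi i) *m M b)).

Definition achievable_fidelity (d n : nat) (psi : 'I_(d ^ 2) -> 'cV[C]_d)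
    (E : 'I_n -> 'M[C]_d) : R :=
  reals.sup (fun x : R => exists M : 'I_n -> 'M[C]_d,
         (forall b, density (M b)) /\ x = avg_fidelity psi E M).

Definition accessible_fidelity (d : nat) (psi : 'I_(d ^ 2) -> 'cV[C]_d) : R :=
  reals.sup (fun x : R => exists (n : nat) (E : 'I_n -> 'M[C]_d)
         (M : 'I_n -> 'M[C]_d),
         povm E /\ (forall b, density (M b)) /\ x = avg_fidelity psi E M).

End Q.

(* Main.v *)
Require Import Defs.
From HB Require Import structures.
From mathcomp Require Import all_boot all_order all_algebra.
From mathcomp Require Import complex.
From mathcomp Require Import reals.
From mathcomp Require Import ring lra.
From mathcomp Require Import classical_sets.
Import Order.TTheory GRing.Theory Num.Theory.
Local Open Scope ring_scope.

Section Helpers.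
Variable R : realType.
Local Notation C := R[i].

Lemma sum_if (I : finType) (F : I -> C) p :
  \sum_y (if y == p then F y else 0) = F p.
Proof. by rewrite -big_mkcond big_pred1_eq. Qed.

Lemma sum_if_out (I : finType) (b : bool) (F : I -> C) :
  \sum_y (if b then F y else 0) = if b then \sum_y F y else 0.
Proof. by case: b => //; rewrite big1. Qed.

Variable d : nat.

Lemma cdotE (u v : 'cV[C]_d) : cdot u v = \sum_x Num.conj (u x 0) * v x 0.
Proof. by rewrite /cdot /adjmx !mxE; apply: eq_bigr => x _; rewrite !mxE. Qed.

Lemma conj_cdot (u v : 'cV[C]_d) : Num.conj (cdot u v) = cdot v u.
Proof.
rewrite !cdotE rmorph_sum; apply: eq_bigr => x _.
by rewrite rmorphM /= conjCK mulrC.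
Qed.

Lemma ketbraE (u : 'cV[C]_d) x y : ketbra u x y = u x 0 * Num.conj (u y 0).
Proof. by rewrite /ketbra /adjmx !mxE big_ord1 !mxE. Qed.

Lemma trQ (u : 'cV[C]_d) (A : 'M[C]_d) :
  \tr (ketbra u *m A) = \sum_x \sum_y u x 0 * Num.conj (u y 0) * A y x.
Proof.
rewrite /mxtrace; apply: eq_bigr => x _; rewrite mxE.
by apply: eq_bigr => y _; rewrite ketbraE.
Qed.

Lemma trE (A : 'M[C]_d) : \tr A = \sum_x A x x.
Proof. by []. Qed.

Lemma trM (A B : 'M[C]_d) : \tr (A *m B) = \sum_x \sum_y A x y * B y x.
Proof. by rewrite /mxtrace; apply: eq_bigr => x _; rewrite mxE. Qed.

Definition vec2 p q (a b : C) : 'cV[C]_d :=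
  \col_x ((if x == p then a else 0) + (if x == q then b else 0)).

Lemma form2 (A : 'M[C]_d) p q a b :
  cdot (vec2 p q a b) (A *m vec2 p q a b) =
  Num.conj a * (a * A p p + b * A p q) + Num.conj b * (a * A q p + b * A q q).
Proof.
rewrite cdotE.
have H : forall x, (A *m vec2 p q a b) x 0 = a * A x p + b * A x q.
  move=> x; rewrite mxE.
  under eq_bigr => y _ do rewrite mxE mulrDr.
  rewrite big_split /=.
  rewrite (eq_bigr (fun y => if y == p then a * A x y else 0)); last first.
    by move=> y _; case: eqP => _; rewrite ?mulr0 // mulrC.
  rewrite [X in _ + X](eq_bigr (fun y => if y == q then b * A x y else 0)); last first.
    by move=> y _; case: eqP => _; rewrite ?mulr0 // mulrC.
  by rewrite !sum_if.
under eq_bigr => x _ do rewrite H mxE rmorphD mulrDl.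
rewrite big_split /=.
rewrite (eq_bigr (fun x => if x == p then Num.conj a * (a * A x p + b * A x q) else 0)); last first.
  by move=> x _; case: eqP => _; rewrite ?rmorph0 ?mul0r.
rewrite [X in _ + X](eq_bigr (fun x => if x == q then Num.conj b * (a * A x p + b * A x q) else 0)); last first.
  by move=> x _; case: eqP => _; rewrite ?rmorph0 ?mul0r.
by rewrite !sum_if.
Qed.

Lemma psd_herm (A : 'M[C]_d) p q : psd A -> A q p = Num.conj (A p q).
Proof.
case=> hA _. have := congr1 (fun M : 'M[C]_d => M q p) hA.
by rewrite /adjmx !mxE => <-.
Qed.

Lemma psd_form (A : 'M[C]_d) p q a b : psd A ->
  0 <= Num.conj a * (a * A p p + b * A p q) + Num.conj b * (a * A q p + b * A q q).
Proof. by case=> _ h; rewrite -form2; apply: h. Qed.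

Lemma psd_diag (A : 'M[C]_d) p : psd A -> 0 <= A p p.
Proof.
move=> hA; have := psd_form A p p 1 0 hA.
by rewrite rmorph1 rmorph0 !mul0r !mul1r !addr0.
Qed.

Lemma psd_minor (A : 'M[C]_d) p q : psd A -> `|A p q| ^+ 2 <= A p p * A q q.
Proof.
move=> hA.
have ha := psd_diag A p hA; have hb := psd_diag A q hA.
have hqp := psd_herm A p q hA.
set a := A p p in ha *; set b := A q q in hb *; set z := A p q in hqp *.
have ca : Num.conj a = a by rewrite geC0_conj.
have cb : Num.conj b = b by rewrite geC0_conj.
rewrite normCK.
have hz : 0 <= z * Num.conj z by apply: mul_conjC_ge0.
move: hb; rewrite le0r => /orP [/eqP b0 | bpos].
  move: ha; rewrite le0r => /orP [/eqP a0 | apos].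
    have := psd_form A p q 1 (- Num.conj z) hA.
    rewrite -/a -/b -/z hqp a0 b0 rmorph1 rmorphN /= conjCK.
    have -> : 1 * (1 * 0 + - Num.conj z * z) + - z * (1 * Num.conj z + - Num.conj z * 0)
       = - (2 * (z * Num.conj z)) by ring.
    rewrite oppr_ge0 => h.
    have : z * Num.conj z <= 0.
      by rewrite -(pmulr_rle0 _ (ltr0n _ 2 : (0:C) < 2%:R)).
    by rewrite mulr0.
  have := psd_form A p q (- z) a hA.
  rewrite -/a -/b -/z hqp rmorphN ca.
  have -> : - Num.conj z * (- z * a + a * z) + a * (- z * Num.conj z + a * b)
     = a * (a * b - z * Num.conj z) by ring.
  by rewrite pmulr_rge0 // subr_ge0.
have := psd_form A p q b (- Num.conj z) hA.
rewrite -/a -/b -/z hqp rmorphN /= conjCK cb.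
have -> : b * (b * a + - Num.conj z * z) + - z * (b * Num.conj z + - Num.conj z * b)
   = b * (a * b - z * Num.conj z) by ring.
by rewrite pmulr_rge0 // subr_ge0.
Qed.

Lemma amgm_entry (A B : 'M[C]_d) p q : psd A -> psd B ->
  2 * (`|A p q| * `|B q p|) <= A p p * B q q + A q q * B p p.
Proof.
move=> hA hB.
have m1 := psd_minor A p q hA; have m2 := psd_minor B q p hB.
have ha := psd_diag A p hA; have hb := psd_diag A q hA.
have ha' := psd_diag B p hB; have hb' := psd_diag B q hB.
set X := A p p * B q q; set Y := A q q * B p p.
have hX : 0 <= X by apply: mulr_ge0.
have hY : 0 <= Y by apply: mulr_ge0.
have hL : 0 <= 2 * (`|A p q| * `|B q p|) by apply: mulr_ge0 => //; apply: mulr_ge0.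
rewrite -ler_sqr ?nnegrE ?addr_ge0 //.
apply: (@le_trans _ _ (4 * (X * Y))).
  have -> : (2 * (`|A p q| * `|B q p|)) ^+ 2 = 4 * (`|A p q| ^+ 2 * `|B q p| ^+ 2) by ring.
  rewrite ler_pM2l ?ltr0n //.
  have -> : X * Y = (A p p * A q q) * (B q q * B p p) by rewrite /X /Y; ring.
  by apply: ler_pM => //; apply: exprn_ge0.
rewrite -subr_ge0.
have -> : (X + Y) ^+ 2 - 4 * (X * Y) = (X - Y) ^+ 2 by ring.
by rewrite -realEsqr realB // ger0_real.
Qed.

Lemma trAB_real (A B : 'M[C]_d) : psd A -> psd B ->
  Num.conj (\tr (A *m B)) = \tr (A *m B).
Proof.
move=> hA hB; rewrite !trM rmorph_sum.
under eq_bigr => x _ do rewrite rmorph_sum.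
under eq_bigr => x _ do under eq_bigr => y _ do rewrite rmorphM /= -(psd_herm A) // -(psd_herm B) //.
by rewrite exchange_big /=; apply: eq_bigr => x _; apply: eq_bigr => y _; rewrite mulrC.
Qed.

Lemma trAB_le (A B : 'M[C]_d) : psd A -> psd B ->
  \tr (A *m B) <= \tr A * \tr B.
Proof.
move=> hA hB.
have hr : \tr (A *m B) \is Num.real by rewrite CrealE trAB_real.
apply: le_trans (real_ler_norm hr) _.
rewrite -(ler_pM2l (ltr0n _ 2 : (0:C) < 2%:R)).
have E : \sum_x \sum_y (A x x * B y y + A y y * B x x) = 2 * (\tr A * \tr B).
  under eq_bigr => x _ do rewrite big_split /=.
  rewrite big_split /= [X in _ + X]exchange_big /= !trE big_distrlr /=.
  by rewrite mulr_natl mulr2n.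
rewrite -E.
apply: (@le_trans _ _ (2 * \sum_x \sum_y `|A x y| * `|B y x|)).
  rewrite ler_pM2l ?ltr0n // trM.
  apply: le_trans (ler_norm_sum _ _ _) _.
  apply: ler_sum => x _.
  apply: le_trans (ler_norm_sum _ _ _) _.
  by apply: ler_sum => y _; rewrite normrM.
rewrite mulr_sumr; apply: ler_sum => x _.
rewrite mulr_sumr; apply: ler_sum => y _.
exact: amgm_entry.
Qed.


Definition S4 (f : 'I_d -> 'I_d -> 'I_d -> 'I_d -> C) :=
  \sum_x \sum_y \sum_z \sum_w f x y z w.

Lemma eq_S4 f g : (forall x y z w, f x y z w = g x y z w) -> S4 f = S4 g.
Proof.
move=> h; rewrite /S4; apply: eq_bigr => x _; apply: eq_bigr => y _.
by apply: eq_bigr => z _; apply: eq_bigr => w _.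
Qed.

Lemma S4D f g : S4 (fun x y z w => f x y z w + g x y z w) = S4 f + S4 g.
Proof.
rewrite /S4 -big_split; apply: eq_bigr => x _; rewrite -big_split.
apply: eq_bigr => y _; rewrite -big_split.
by apply: eq_bigr => z _; rewrite -big_split.
Qed.

Lemma S4Z c f : S4 (fun x y z w => c * f x y z w) = c * S4 f.
Proof.
rewrite /S4 mulr_sumr; apply: eq_bigr => x _; rewrite mulr_sumr.
apply: eq_bigr => y _; rewrite mulr_sumr.
by apply: eq_bigr => z _; rewrite mulr_sumr.
Qed.

Lemma S4N f : S4 (fun x y z w => - f x y z w) = - S4 f.
Proof.
rewrite -mulN1r -S4Z; apply: eq_S4 => x y z w; by rewrite mulN1r.
Qed.

Lemma S4_conj f : Num.conj (S4 f) = S4 (fun x y z w => Num.conj (f x y z w)).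
Proof.
rewrite /S4 rmorph_sum; apply: eq_bigr => x _; rewrite rmorph_sum.
apply: eq_bigr => y _; rewrite rmorph_sum.
by apply: eq_bigr => z _; rewrite rmorph_sum.
Qed.

Lemma S4_sum (J : finType) (F : J -> 'I_d -> 'I_d -> 'I_d -> 'I_d -> C) :
  S4 (fun x y z w => \sum_j F j x y z w) = \sum_j S4 (F j).
Proof.
rewrite /S4.
under eq_bigr => x _ do under eq_bigr => y _ do under eq_bigr => z _ do rewrite exchange_big.
under eq_bigr => x _ do under eq_bigr => y _ do rewrite exchange_big.
under eq_bigr => x _ do rewrite exchange_big.
by rewrite exchange_big.
Qed.

Lemma S4_fact (a b c e : 'I_d -> C) :
  S4 (fun x y z w => a x * b y * c z * e w) =
  (\sum_x a x) * (\sum_y b y) * (\sum_z c z) * (\sum_w e w).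
Proof.
rewrite /S4.
rewrite -!mulrA mulr_suml; apply: eq_bigr => x _.
rewrite mulr_suml mulr_sumr; apply: eq_bigr => y _.
rewrite mulr_suml !mulr_sumr; apply: eq_bigr => z _.
rewrite !mulr_sumr; apply: eq_bigr => w _.
by rewrite !mulrA.
Qed.

Definition Dd (x y z w : 'I_d) : C :=
  ((w == z) && (y == x))%:R + ((w == x) && (z == y))%:R.

Lemma andb_mul (b1 b2 : bool) (f : C) :
  (b1 && b2)%:R * f = if b1 then (if b2 then f else 0) else 0.
Proof. by case: b1; case: b2; rewrite /= ?mul1r ?mul0r. Qed.

Lemma sumD f : S4 (fun x y z w => Dd x y z w * f x y z w) =
  \sum_x \sum_z f x x z z + \sum_x \sum_y f x y y x.
Proof.
rewrite (@eq_S4 _ (fun x y z w =>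
   (if w == z then (if y == x then f x y z w else 0) else 0) +
   (if w == x then (if z == y then f x y z w else 0) else 0))); last first.
  by move=> x y z w; rewrite /Dd mulrDl !andb_mul.
rewrite S4D /S4.
congr (_ + _); apply: eq_bigr => x _.
  under eq_bigr => y _ do under eq_bigr => z _ do rewrite sum_if.
  under eq_bigr => y _ do rewrite sum_if_out.
  by rewrite sum_if.
under eq_bigr => y _ do under eq_bigr => z _ do rewrite sum_if.
by under eq_bigr => y _ do rewrite sum_if.
Qed.

Lemma S2_fact (J : finType) (a b : J -> 'I_d -> C) :
  \sum_x \sum_z \sum_j a j x * b j z = \sum_j (\sum_x a j x) * (\sum_z b j z).
Proof.
under eq_bigr => x _ do rewrite exchange_big.
rewrite exchange_big; apply: eq_bigr => j _.
by rewrite big_distrlr.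
Qed.

Lemma S4_prod2 (a b : 'I_d -> 'I_d -> C) :
  (\sum_x \sum_y a x y) * (\sum_z \sum_w b z w) = S4 (fun x y z w => a x y * b z w).
Proof.
rewrite /S4 mulr_suml; apply: eq_bigr => x _.
rewrite mulr_suml; apply: eq_bigr => y _.
rewrite mulr_sumr; apply: eq_bigr => z _.
by rewrite mulr_sumr.
Qed.

Lemma conj_Dd x y z w : Num.conj (Dd x y z w) = Dd x y z w.
Proof. by rewrite /Dd rmorphD /= !conjC_nat. Qed.

Lemma sum_natb (x : 'I_d) : \sum_(z : 'I_d) ((z == x)%:R : C) = 1.
Proof.
rewrite (eq_bigr (fun z => if z == x then 1 else 0)) ?sum_if //.
by move=> z _; case: eqP.
Qed.

Lemma sum_natb' (x : 'I_d) : \sum_(z : 'I_d) ((x == z)%:R : C) = 1.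
Proof.
rewrite (eq_bigr (fun z => if z == x then 1 else 0)) ?sum_if //.
by move=> z _; rewrite eq_sym; case: eqP.
Qed.

Lemma S4_DD : S4 (fun x y z w => Dd x y z w * Dd x y z w) =
   2 * (d%:R * (d%:R + 1)).
Proof.
rewrite sumD.
have E1 : forall x, \sum_z Dd x x z z = d%:R + 1.
  move=> x; rewrite /Dd.
  under eq_bigr => z _ do rewrite !eqxx /= andbb.
  by rewrite big_split /= sumr_const card_ord; congr (_ + _); apply: sum_natb.
have E2 : forall x, \sum_y Dd x y y x = 1 + d%:R.
  move=> x; rewrite /Dd.
  under eq_bigr => y _ do rewrite !eqxx /= [y == x]eq_sym andbb.
  rewrite big_split /= sumr_const card_ord; congr (_ + _).
  by apply: sum_natb'.
under eq_bigr => x _ do rewrite E1.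
under [X in _ + X]eq_bigr => x _ do rewrite E2.
rewrite !sumr_const card_ord -[(_ + 1) *+ d]mulr_natl -[(1 + _) *+ d]mulr_natl.
move: (d%:R : C) => n. ring.
Qed.

End Helpers.
Arguments S4 {R d}.
Arguments Dd {R d}.

Section Sic.
Variable R : realType.
Local Notation C := R[i].
Variable d : nat.
Variable psi : 'I_(d ^ 2) -> 'cV[C]_d.
Hypothesis hsic : SIC psi.

Local Notation U j x := (psi j x 0).

Definition Tt (x y z w : 'I_d) : C :=
  \sum_j U j x * Num.conj (U j y) * U j z * Num.conj (U j w).

Lemma norm1 j : \sum_x U j x * Num.conj (U j x) = 1.
Proof.
case: hsic => h _; rewrite -(h j) cdotE; apply: eq_bigr => x _; exact: mulrC.
Qed.

Lemma S4_DT : S4 (fun x y z w => Dd x y z w * Tt x y z w) = (2 * d ^ 2)%:R.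
Proof.
rewrite sumD /Tt.
rewrite (eq_bigr (fun x => \sum_z \sum_j (U j x * Num.conj (U j x)) * (U j z * Num.conj (U j z)))); last first.
  move=> x _; apply: eq_bigr => z _; apply: eq_bigr => j _; ring.
rewrite [X in _ + X](eq_bigr (fun x => \sum_y \sum_j (U j x * Num.conj (U j x)) * (U j y * Num.conj (U j y)))); last first.
  move=> x _; apply: eq_bigr => y _; apply: eq_bigr => j _; ring.
rewrite !S2_fact.
under eq_bigr => j _ do rewrite !norm1 mulr1.
by rewrite sumr_const card_ord -natrD addnn mul2n.
Qed.

Definition esic : C := ((d.+1)%:R^-1) ^+ 2.

Lemma S4_TT : S4 (fun x y z w => Tt x y z w * Num.conj (Tt x y z w)) =
  (esic *+ (d ^ 2) + (1 - esic)) *+ (d ^ 2).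
Proof.
rewrite (@eq_S4 _ _ _ (fun x y z w => \sum_j \sum_k
   (U j x * Num.conj (U k x)) * (Num.conj (U j y) * U k y) *
   (U j z * Num.conj (U k z)) * (Num.conj (U j w) * U k w))); last first.
  move=> x y z w; rewrite /Tt rmorph_sum big_distrlr /=.
  apply: eq_bigr => j _; apply: eq_bigr => k _.
  rewrite !rmorphM /= !conjCK; ring.
rewrite S4_sum; under eq_bigr => j _ do rewrite S4_sum.
under eq_bigr => j _ do under eq_bigr => k _ do rewrite S4_fact.
have G1 : forall j k, \sum_x U j x * Num.conj (U k x) = Num.conj (cdot (psi j) (psi k)).
  by move=> j k; rewrite conj_cdot cdotE; apply: eq_bigr => x _; rewrite mulrC.
have G2 : forall j k, \sum_x Num.conj (U j x) * U k x = cdot (psi j) (psi k).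
  by move=> j k; rewrite cdotE.
have H : forall j k, Num.conj (cdot (psi j) (psi k)) * cdot (psi j) (psi k) *
     Num.conj (cdot (psi j) (psi k)) * cdot (psi j) (psi k) =
     esic + (if k == j then 1 - esic else 0).
  move=> j k; case: eqP => [-> | /eqP kj].
    case: hsic => h _; rewrite h rmorph1 !mulr1; ring.
  case: hsic => _ h; have := h j k; rewrite eq_sym kj => /(_ isT).
  rewrite normCK /esic => <-; rewrite addr0; ring.
transitivity (\sum_(j : 'I_(d ^ 2)) \sum_(k : 'I_(d ^ 2)) (esic + (if k == j then 1 - esic else 0) : C)).
  apply: eq_bigr => j _; apply: eq_bigr => k _.
  by rewrite -H -G1 -G2.
under eq_bigr => j _ do rewrite big_split /= sumr_const card_ord sum_if.
by rewrite sumr_const card_ord.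
Qed.

Definition cst : C := d%:R / (d.+1)%:R.

Lemma conj_cst : Num.conj cst = cst.
Proof. by rewrite /cst rmorphM /= fmorphV /= !conjC_nat. Qed.

Lemma S4_N : S4 (fun x y z w => (Tt x y z w - cst * Dd x y z w) *
     Num.conj (Tt x y z w - cst * Dd x y z w)) = 0.
Proof.
rewrite (@eq_S4 _ _ _ (fun x y z w => (Tt x y z w * Num.conj (Tt x y z w) +
   (- cst) * (Dd x y z w * Num.conj (Tt x y z w))) +
   ((- cst) * (Dd x y z w * Tt x y z w) + cst ^+ 2 * (Dd x y z w * Dd x y z w)))); last first.
  move=> x y z w; rewrite rmorphB rmorphM /= conj_cst conj_Dd; ring.
rewrite !S4D !S4Z S4_TT.
rewrite (@eq_S4 _ _ (fun x y z w => Dd x y z w * Num.conj (Tt x y z w))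
   (fun x y z w => Num.conj (Dd x y z w * Tt x y z w))); last first.
  by move=> x y z w; rewrite rmorphM /= conj_Dd.
rewrite -S4_conj S4_DT S4_DD conjC_nat /esic /cst.
rewrite -[(_ + _) *+ (d ^ 2)]mulr_natr -[(_ ^+ 2) *+ (d ^ 2)]mulr_natr.
rewrite natrM !natrX -addn1 natrD.
have hn : (d%:R + 1%:R : C) != 0 by rewrite -natrD pnatr_eq0 addn1.
move: hn; move: (d%:R : C) => n hn.
field; exact: hn.
Qed.

Lemma TtE x y z w : Tt x y z w = cst * Dd x y z w.
Proof.
have H := S4_N; rewrite /S4 in H.
set F := fun x y z w => (Tt x y z w - cst * Dd x y z w) *
     Num.conj (Tt x y z w - cst * Dd x y z w).
have F0 : forall x y z w, 0 <= F x y z w by move=> *; apply: mul_conjC_ge0.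
have H1 := @psumr_eq0P _ _ _ _ (fun x _ => sumr_ge0 _ (fun y _ => sumr_ge0 _
      (fun z _ => sumr_ge0 _ (fun w _ => F0 x y z w)))) H x isT.
have H2 := @psumr_eq0P _ _ _ _ (fun y _ => sumr_ge0 _
      (fun z _ => sumr_ge0 _ (fun w _ => F0 x y z w))) H1 y isT.
have H3 := @psumr_eq0P _ _ _ _ (fun z _ => sumr_ge0 _ (fun w _ => F0 x y z w)) H2 z isT.
have H4 := @psumr_eq0P _ _ _ _ (fun w _ => F0 x y z w) H3 w isT.
by move/eqP: H4; rewrite mul_conjC_eq0 subr_eq0 => /eqP.
Qed.

Lemma bilin (A B : 'M[C]_d) :
  \sum_j \tr (ketbra (psi j) *m A) * \tr (ketbra (psi j) *m B) =
  cst * (\tr A * \tr B + \tr (A *m B)).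
Proof.
under eq_bigr => j _ do rewrite !trQ S4_prod2.
rewrite -S4_sum.
rewrite (@eq_S4 _ _ _ (fun x y z w => cst * (Dd x y z w * (A y x * B w z)))); last first.
  move=> x y z w.
  transitivity (Tt x y z w * (A y x * B w z)).
    by rewrite /Tt mulr_suml; apply: eq_bigr => j _; ring.
  by rewrite TtE; ring.
rewrite S4Z sumD; congr (cst * _); congr (_ + _).
  by rewrite !trE big_distrlr.
by rewrite trM exchange_big.
Qed.

Definition kk : C := ((d ^ 2)%:R)^-1 * cst.

Lemma avgE n (E M : 'I_n -> 'M[C]_d) : avg_fidelity psi E M =
  complex.Re (\sum_b kk * (\tr (E b) * \tr (M b) + \tr (E b *m M b))).
Proof.
rewrite /avg_fidelity; congr complex.Re; apply: eq_bigr => b _.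
transitivity (((d ^ 2)%:R)^-1 * \sum_i \tr (ketbra (psi i) *m E b) * \tr (ketbra (psi i) *m M b)).
  by rewrite mulr_sumr; apply: eq_bigr => i _; rewrite mulrA.
by rewrite bilin /kk mulrA.
Qed.

Hypothesis hd : (0 < d)%N.

Lemma kk_gt0 : 0 < kk.
Proof.
by rewrite /kk /cst mulr_gt0 ?invr_gt0 ?divr_gt0 ?ltr0n ?expn_gt0 ?hd.
Qed.

Lemma kk_val : kk * (d%:R + d%:R) = 2 / (d.+1)%:R.
Proof.
rewrite /kk /cst natrX -addn1 natrD.
have hn : (d%:R + 1%:R : C) != 0 by rewrite -natrD pnatr_eq0 addn1.
have hd0 : (d%:R : C) != 0 by rewrite pnatr_eq0 -lt0n hd.
have hn1 : (1 + d%:R : C) != 0 by rewrite addrC.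
field; by rewrite hn1 hd0.
Qed.

Lemma Re_val : complex.Re (2 / (d.+1)%:R : C) = 2 / (d.+1)%:R.
Proof.
have -> : (2 / (d.+1)%:R : C) = ((2 / (d.+1)%:R : R)%:C)%C.
  by rewrite fmorph_div /= !rmorph_nat.
by [].
Qed.

Lemma fid_le n (E M : 'I_n -> 'M[C]_d) : povm E -> (forall b, density (M b)) ->
  avg_fidelity psi E M <= 2 / (d.+1)%:R.
Proof.
move=> [hE hsum] hM.
rewrite avgE -Re_val.
have : \sum_b kk * (\tr (E b) * \tr (M b) + \tr (E b *m M b)) <= 2 / (d.+1)%:R.
  rewrite -kk_val.
  apply: (@le_trans _ _ (\sum_b kk * (\tr (E b) + \tr (E b)))).
    apply: ler_sum => b _.
    rewrite ler_pM2l ?kk_gt0 //.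
    case: (hM b) => hMb trMb.
    rewrite trMb mulr1 lerD2l.
    by have := @trAB_le _ _ _ _ (hE b) hMb; rewrite trMb mulr1.
  by rewrite -mulr_sumr big_split /= -raddf_sum /= hsum mxtrace1.
by rewrite lecE => /andP [] _ h.
Qed.

Lemma tr_ketbra (v : 'cV[C]_d) : \tr (ketbra v) = cdot v v.
Proof. by rewrite /ketbra mxtrace_mulC /mxtrace big_ord1. Qed.

Lemma ketbra2 (v : 'cV[C]_d) : ketbra v *m ketbra v = cdot v v *: ketbra v.
Proof.
rewrite /ketbra mulmxA -[v *m adjmx v *m v]mulmxA.
rewrite [adjmx v *m v]mx11_scalar mul_mx_scalar -scalemxAl.
by [].
Qed.

Lemma fid_rank1 n (g : 'I_n -> R) (phi : 'I_n -> 'cV[C]_d) :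
  (forall b, cdot (phi b) (phi b) = 1) ->
  povm (fun b => ((g b)%:C)%C *: ketbra (phi b)) ->
  avg_fidelity psi (fun b => ((g b)%:C)%C *: ketbra (phi b)) (fun b => ketbra (phi b))
   = 2 / (d.+1)%:R.
Proof.
move=> hphi [_ hsum].
rewrite avgE -Re_val -kk_val; congr complex.Re.
have T1 : forall b, \tr (((g b)%:C)%C *: ketbra (phi b)) = ((g b)%:C)%C.
  by move=> b; rewrite mxtraceZ tr_ketbra hphi mulr1.
under eq_bigr => b _ do rewrite -scalemxAl ketbra2 hphi scale1r T1 tr_ketbra hphi mulr1.
rewrite -mulr_sumr.
have <- : \sum_b ((g b)%:C)%C = (d%:R : C).
  under eq_bigr => b _ do rewrite -T1.
  by rewrite -raddf_sum /= hsum mxtrace1.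
by rewrite big_split.
Qed.

Lemma adjmxE (M : 'M[C]_d) x y : adjmx M x y = Num.conj (M y x).
Proof. by rewrite /adjmx !mxE. Qed.

Lemma psd_ketbra (v : 'cV[C]_d) : psd (ketbra v).
Proof.
split.
  apply/matrixP => x y; rewrite adjmxE !ketbraE rmorphM /= conjCK mulrC.
  by [].
move=> w.
have -> : cdot w (ketbra v *m w) = cdot w v * Num.conj (cdot w v).
  rewrite conj_cdot /cdot /ketbra -!mulmxA.
  rewrite [adjmx w *m _]mulmxA.
  by rewrite [LHS]mxE big_ord1.
exact: mul_conjC_ge0.
Qed.

Lemma density_ketbra (v : 'cV[C]_d) : cdot v v = 1 -> density (ketbra v).
Proof. by move=> h; split; [exact: psd_ketbra | rewrite tr_ketbra h]. Qed.

Definition ebas (b : 'I_d) : 'cV[C]_d := delta_mx b 0.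

Lemma ebasE b x : ebas b x 0 = (if x == b then 1 else 0).
Proof. by rewrite /ebas mxE eqxx andbT; case: eqP. Qed.

Lemma cdot_ebas b : cdot (ebas b) (ebas b) = 1.
Proof.
rewrite cdotE (eq_bigr (fun x => if x == b then 1 else 0)) ?sum_if //.
by move=> x _; rewrite !ebasE; case: eqP; rewrite ?rmorph1 ?rmorph0 ?mulr1 ?mul0r.
Qed.

Lemma povm_ebas : povm (fun b => ((1 : R)%:C)%C *: ketbra (ebas b)).
Proof.
split.
  by move=> b; rewrite scale1r; exact: psd_ketbra.
apply/matrixP => x y; rewrite summxE !mxE.
rewrite (eq_bigr (fun b => if b == x then ((x == y)%:R : C) else 0)).
  by rewrite sum_if.
move=> b _ /=; rewrite scale1r ketbraE !ebasE.
case: (eqVneq b x) => [-> | nbx]; last by rewrite mul0r.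
rewrite mul1r eq_sym; case: eqP => _; by rewrite ?rmorph1 ?rmorph0.
Qed.

End Sic.

Arguments ebas {R d}.

Lemma sup_max (R : realType) (E : R -> Prop) v : E v -> (forall x, E x -> x <= v) ->
  reals.sup E = v.
Proof.
move=> Ev ub; apply/le_anti/andP; split.
  by apply: ge_sup; [exists v | exact: ub].
by apply: (ub_le_sup (E := E)); [exists v => x /ub | ].
Qed.

Local Open Scope complex_scope.

Theorem theorem3 (R : realType) (d : nat) (hd : (2 <= d)%N)
    (psi : 'I_(d ^ 2) -> 'cV[R[i]]_d) (hsic : SIC psi) :
  accessible_fidelity psi = 2 / (d.+1)%:R /\
  forall (n : nat) (g : 'I_n -> R) (phi : 'I_n -> 'cV[R[i]]_d),
    (forall b, 0 < g b) ->
    (forall b, cdot (phi b) (phi b) = 1) ->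
    povm (fun b => (g b)%:C *: ketbra (phi b)) ->
    achievable_fidelity psi (fun b => (g b)%:C *: ketbra (phi b))
      = 2 / (d.+1)%:R.
Proof.
have hd0 : (0 < d)%N by apply: leq_trans hd.
split.
  apply: sup_max.
    exists d, (fun b => ((1 : R)%:C) *: ketbra (ebas b)), (fun b => ketbra (ebas b)).
    split; first exact: povm_ebas.
    split; first by move=> b; apply: density_ketbra; apply: cdot_ebas.
    symmetry; apply: fid_rank1 => //; [exact: cdot_ebas | exact: povm_ebas].
  move=> x [n [E [M [hE [hM ->]]]]].
  by apply: fid_le.
move=> n g phi hg hphi hpovm.
apply: sup_max.
  exists (fun b => ketbra (phi b)); split.
    by move=> b; apply: density_ketbra.
  by symmetry; apply: fid_rank1.
move=> x [M [hM ->]].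
by apply: fid_le.
Qed.
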